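(* Let $N\geq 1$ be an integer and let $\mathrm{Mat}_2(\mathbb{Z},N)$ denote the set of $2\times 2$ matrices with entries in $[-N,N]\cap\mathbb{Z}$. Write \[ A=\begin{pmatrix} a_1 & a_2\\ a_3 & a_4\end{pmatrix},\qquad B=\begin{pmatrix} b_1 & b_2\\ b_3 & b_4\end{pmatrix}, \] and set \[ \Gamma=\{(A,B)\in\mathrm{Mat}_2(\mathbb{Z},N)^2 : AB=BA\},\qquad \Gamma'=\{(A,B)\in\Gamma : a_2b_2a_3b_3\neq 0\}. \] Then \[ |\Gamma\setminus\Gamma'| = 2(2N)^5 + O(N^4\log N). \]
   Context: The implied constant in the $O$-term is absolute. The set $\Gamma\setminus\Gamma'$ consists of the commuting pairs of $2\times 2$ integer matrices with entries bounded by $N$ in absolute value for which at least one of the off-diagonal entries $a_2,a_3,b_2,b_3$ vanishes. *)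

(* Defs.v *)
From HB Require Import structures.
From mathcomp Require Import all_boot all_order all_algebra.
Set Implicit Arguments. Unset Strict Implicit. Unset Printing Implicit Defensive.
Import GRing.Theory Num.Theory.
Local Open Scope ring_scope.

(* An index i : 'I_(2N+1) encodes the integer i - N, so 'I_(2N+1) is in
   bijection with [-N, N] ∩ Z. *)
Definition ent (N : nat) (i : 'I_(2 * N + 1)) : int := (i : nat)%:Z - N%:Z.

Definition toZ (N : nat) (M : 'M['I_(2 * N + 1)]_2) : 'M[int]_2 :=
  \matrix_(i, j) ent (M i j).

(* a_1 = A 0 0, a_2 = A 0 1, a_3 = A 1 0, a_4 = A 1 1. *)
Definition i0 : 'I_2 := ord0.
Definition i1 : 'I_2 := ord_max.

Definition GammaMinusGammaP (N : nat) :
  {set 'M['I_(2 * N + 1)]_2 * 'M['I_(2 * N + 1)]_2} :=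
  [set p | let A := toZ p.1 in let B := toZ p.2 in
           (A *m B == B *m A) && (A i0 i1 * B i0 i1 * A i1 i0 * B i1 i0 == 0)].

Definition card_GammaMinusGammaP (N : nat) : nat := #|GammaMinusGammaP N|.

(* Main.v *)
Require Import Defs.
From Stdlib Require Import Reals.
From Stdlib Require Import Lra.
From HB Require Import structures.
From mathcomp Require all_boot all_order all_algebra zify ring.

Module A.
Import all_boot all_order all_algebra zify ring.
Set Implicit Arguments. Unset Strict Implicit. Unset Printing Implicit Defensive.
Import GRing.Theory Num.Theory.

Lemma sum_max (F : nat -> nat) n :
  \sum_(a < n) \sum_(b < n) F (maxn a b) = \sum_(m < n) (2 * m + 1) * F m.
Proof.
elim: n => [|n IH]; first by rewrite !big_ord0.
rewrite big_ord_recr /= big_ord_recr /=.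
under eq_bigr => a _ do rewrite big_ord_recr /=.
rewrite big_split /= IH.
have -> : \sum_(i < n) F (maxn i n) = n * F n.
  rewrite (eq_bigr (fun _ => F n)); last by move=> i _; rewrite (maxn_idPr (ltnW (ltn_ord i))).
  by rewrite sum_nat_const card_ord.
have -> : \sum_(i < n) F (maxn n i) = n * F n.
  rewrite (eq_bigr (fun _ => F n)); last by move=> i _; rewrite (maxn_idPl (ltnW (ltn_ord i))).
  by rewrite sum_nat_const card_ord.
rewrite maxnn big_ord_recr /=. ring.
Qed.

Lemma sum_count n k : \sum_(g < n) (g <= k : nat) = minn n k.+1.
Proof.
elim: n => [|n IH]; first by rewrite big_ord0 min0n.
rewrite big_ord_recr /= IH. case: (leqP n k) => h /=; lia.
Qed.

Lemma sum_pair (X Y : finType) (G : X * Y -> nat) :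
  \sum_(p : X * Y) G p = \sum_(x : X) \sum_(y : Y) G (x, y).
Proof. by rewrite pair_bigA; apply: eq_bigr => -[]. Qed.

Notation Q M := ('I_M.+1 * 'I_M.+1 * 'I_M.+1 * 'I_M.+1)%type.
Definition Tn (M : nat) : {set 'I_M.+1 * 'I_M.+1 * 'I_M.+1 * 'I_M.+1} :=
  [set q : Q M | q.1.1.1 * q.2 == q.1.1.2 * q.1.2 :> nat].
Definition Z0 (M : nat) : {set 'I_M.+1 * 'I_M.+1 * 'I_M.+1 * 'I_M.+1} :=
  [set q : Q M | (q.1.1.1 == 0 :> nat) && (q.1.1.2 == 0 :> nat)].
Definition Dn (M : nat) : {set 'I_M.+1 * 'I_M.+1 * 'I_M.+1 * 'I_M.+1} :=
  [set q : Q M | [&& 0 < maxn q.1.1.1 q.1.1.2, q.1.2 * maxn q.1.1.1 q.1.1.2 <= M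
             & q.2 * maxn q.1.1.1 q.1.1.2 <= M]].
Definition Fm (M : nat) (q : 'I_M.+1 * 'I_M.+1 * 'I_M.+1 * 'I_M.+1) :
   'I_M.+1 * 'I_M.+1 * 'I_M.+1 * 'I_M.+1 :=
  let: (a, b, g, t) := q in
  (inord (g * a), inord (g * b), inord (a * t), inord (b * t)).

Lemma card_Z0 M : #|Z0 M| <= M.+1 * M.+1.
Proof.
have -> : M.+1 * M.+1 = #|[set: 'I_M.+1 * 'I_M.+1]| by rewrite cardsT card_prod card_ord.
set f := fun p : 'I_M.+1 * 'I_M.+1 => ((@ord0 M, @ord0 M), p.1, p.2).
apply: leq_trans (leq_imset_card f _).
apply: subset_leq_card; apply/subsetP => -[[[x y] z] w]; rewrite inE /= => /andP[/eqP hx /eqP hy].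
apply/imsetP; exists (z, w); first exact: in_setT.
have ex : x = ord0 by apply: val_inj; exact: hx.
have ey : y = ord0 by apply: val_inj; exact: hy.
by rewrite ex ey.
Qed.

Lemma Tn_sub M : Tn M \subset Z0 M :|: Fm (M:=M) @: Dn M.
Proof.
apply/subsetP => -[[[x y] z] w]; rewrite inE /= => /eqP E.
rewrite in_setU; case: (boolP ((x == 0 :> nat) && (y == 0 :> nat))) => [H|H].
  by apply/orP; left; rewrite inE.
apply/orP; right; apply/imsetP.
have gpos : 0 < gcdn x y by rewrite gcdn_gt0; lia.
set g := gcdn x y.
have [a ea] : exists a, x = a * g :> nat by exists (x %/ g); rewrite divnK // dvdn_gcdl.
have [b eb] : exists b, y = b * g :> nat by exists (y %/ g); rewrite divnK // dvdn_gcdr.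
have cop : coprime a b.
  have h : g = gcdn a b * g by rewrite muln_gcdl -ea -eb.
  rewrite /coprime; apply/eqP; apply/eqP; rewrite -(eqn_pmul2r gpos) mul1n; apply/eqP; by rewrite -h.
have E2 : a * w = b * z.
  apply/eqP; rewrite -(eqn_pmul2r gpos); apply/eqP.
  by rewrite mulnAC -ea [in RHS]mulnAC -eb.
have [t [zt wt]] : exists t, z = a * t :> nat /\ w = b * t :> nat.
  case: (posnP a) => a0.
    have x0 : (x : nat) = 0 by rewrite ea a0.
    have b1 : b = 1.
      move: cop; rewrite a0 /coprime gcd0n; by move/eqP.
    exists w; split; last by rewrite b1 mul1n.
    rewrite a0 mul0n; move: E; rewrite x0 mul0n => /esym/eqP; rewrite muln_eq0 => /orP[]/eqP h //.
    move: H; rewrite x0 eqxx /= h; by [].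
  have : a %| z by rewrite -(Gauss_dvdr z cop) -E2 dvdn_mulr.
  case/dvdnP => t zt; exists t; split; first by rewrite zt mulnC.
  apply/eqP; rewrite -(eqn_pmul2l a0); apply/eqP; rewrite E2 zt; ring.
have xM := ltn_ord x; have yM := ltn_ord y; have zM := ltn_ord z; have wM := ltn_ord w.
have mpos : 0 < maxn a b.
  case: (posnP a) => [a0|]; last by move=> h; rewrite leq_max h.
  case: (posnP b) => [b0|]; last by move=> h; rewrite leq_max h orbT.
  by move: H; rewrite ea eb a0 b0 !mul0n.
have gm : g * maxn a b <= M.
  case: (leqP a b) => hab; nia.
have tm : t * maxn a b <= M.
  case: (leqP a b) => hab; nia.
have aM : a <= M by nia.
have bM : b <= M by nia.
have gM : g <= M by nia.
have tM : t <= M by nia.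
exists (inord a, inord b, inord g, inord t).
  rewrite inE /= !inordK; try lia.
rewrite /Fm !inordK; try lia.
congr (_, _, _, _); apply/val_inj; rewrite /= inordK; lia.
Qed.

Lemma card_Dn M :
  #|Dn M| <= \sum_(m < M.+1) (2 * m + 1) * ((0 < m) * (M %/ m).+1 ^ 2).
Proof.
rewrite -sum1_card big_mkcond /= sum_pair sum_pair sum_pair.
rewrite -(sum_max (fun m => (0 < m) * (M %/ m).+1 ^ 2)).
apply: leq_sum => a _; apply: leq_sum => b _.
case: (posnP (maxn a b)) => m0.
  rewrite big1; first exact: leq0n.
  move=> g _; rewrite big1 // => t _; by rewrite inE /= m0 ltnn.
set k := M %/ maxn a b.
rewrite (eq_bigr (fun g : 'I_M.+1 => (g <= k : nat) * \sum_(t < M.+1) (t <= k : nat))); last first.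
  move=> g _; rewrite big_distrr /=; apply: eq_bigr => t _.
  rewrite inE /=; move: m0; rewrite /k; set m := maxn _ _ => m0.
  rewrite m0 /= !leq_divRL //.
  by case: (g * maxn a b <= M); case: (t * maxn a b <= M).
rewrite -big_distrl /= !sum_count mul1n.
rewrite expnS expn1; apply: leq_mul; exact: geq_minr.
Qed.

Lemma card_Tn M :
  #|Tn M| <= M.+1 * M.+1 + \sum_(m < M.+1) (2 * m + 1) * ((0 < m) * (M %/ m).+1 ^ 2).
Proof.
apply: leq_trans (subset_leq_card (Tn_sub M)) _.
apply: leq_trans (leq_card_setU _ _) _.
apply: leq_add; first exact: card_Z0.
apply: leq_trans (leq_imset_card _ _) _.
exact: card_Dn.
Qed.

Section P2.
Local Open Scope ring_scope.
Lemma cN_proof N : (N < 2 * N + 1)%N. Proof. lia. Qed.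
Definition cN N : 'I_(2 * N + 1) := Ordinal (cN_proof N).
Lemma ent_cN N : ent (cN N) = 0. Proof. by rewrite /ent /= subrr. Qed.
Lemma ent_inj N : injective (@ent N).
Proof. move=> x y; rewrite /ent => h; apply/val_inj => /=; lia. Qed.
Lemma ent_bound N (c : 'I_(2 * N + 1)) : (absz (ent c) <= N)%N.
Proof. have := ltn_ord c; rewrite /ent; lia. Qed.
Lemma toZE N (A : 'M['I_(2 * N + 1)]_2) i j : toZ A i j = ent (A i j).
Proof. by rewrite /toZ mxE. Qed.

Lemma ord2P (i : 'I_2) : i = i0 \/ i = i1.
Proof. case: i => [[|[|k]] Hk]; [left|right|]; try (by apply/val_inj). by []. Qed.

Lemma mul2 (A B : 'M[int]_2) i j : (A *m B) i j = A i i0 * B i0 j + A i i1 * B i1 j.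
Proof.
rewrite mxE !big_ord_recl big_ord0 addr0.
by have -> : lift ord0 (ord0 : 'I_1) = i1 by apply/val_inj.
Qed.

Lemma commE (A B : 'M[int]_2) : (A *m B == B *m A) =
  [&& A i0 i1 * B i1 i0 == A i1 i0 * B i0 i1,
      B i0 i1 * (A i0 i0 - A i1 i1) == A i0 i1 * (B i0 i0 - B i1 i1) &
      A i1 i0 * (B i0 i0 - B i1 i1) == B i1 i0 * (A i0 i0 - A i1 i1)].
Proof.
apply/eqP/and3P => [H|[/eqP h1 /eqP h2 /eqP h3]].
  have e00 := congr1 (fun M : 'M[int]_2 => M i0 i0) H; have e01 := congr1 (fun M : 'M[int]_2 => M i0 i1) H.
  have e10 := congr1 (fun M : 'M[int]_2 => M i1 i0) H.
  move: e00 e01 e10 => /=; rewrite !mul2 => e00 e01 e10.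
  split; apply/eqP; nia.
apply/matrixP => i j; rewrite !mul2.
case: (ord2P i) => ->; case: (ord2P j) => ->; nia.
Qed.

Lemma key (a2 a3 d b2 b3 e : int) :
  a2 * b3 = a3 * b2 -> b2 * d = a2 * e -> a3 * e = b3 * d -> a2 * b2 * a3 * b3 = 0 ->
  [\/ [/\ a2 = 0, a3 = 0 & d = 0], [/\ b2 = 0, b3 = 0 & e = 0],
      a2 = 0 /\ b2 = 0 | a3 = 0 /\ b3 = 0].
Proof.
move=> h1 h2 h3 /eqP; rewrite !mulf_eq0 => /orP[/orP[/orP[]|]|] /eqP z.
- case: (eqVneq b2 0) => hb; first by constructor 3.
  have ha3 : a3 = 0.
    by apply/eqP; move: h1; rewrite z mul0r => /esym/eqP; rewrite mulf_eq0 (negbTE hb) orbF.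
  have hd : d = 0.
    by apply/eqP; move: h2; rewrite z mul0r => /eqP; rewrite mulf_eq0 (negbTE hb).
  by constructor 1.
- case: (eqVneq a2 0) => ha; first by constructor 3.
  have hb3 : b3 = 0.
    by apply/eqP; move: h1; rewrite z mulr0 => /eqP; rewrite mulf_eq0 (negbTE ha).
  have he : e = 0.
    by apply/eqP; move: h2; rewrite z mul0r => /esym/eqP; rewrite mulf_eq0 (negbTE ha).
  by constructor 2.
- case: (eqVneq b3 0) => hb; first by constructor 4.
  have ha2 : a2 = 0.
    by apply/eqP; move: h1; rewrite z mul0r => /eqP; rewrite mulf_eq0 (negbTE hb) orbF.
  have hd : d = 0.
    by apply/eqP; move: h3; rewrite z mul0r => /esym/eqP; rewrite mulf_eq0 (negbTE hb).
  by constructor 1.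
- case: (eqVneq a3 0) => ha; first by constructor 4.
  have hb2 : b2 = 0.
    by apply/eqP; move: h1; rewrite z mulr0 => /esym/eqP; rewrite mulf_eq0 (negbTE ha).
  have he : e = 0.
    by apply/eqP; move: h3; rewrite z mul0r => /eqP; rewrite mulf_eq0 (negbTE ha).
  by constructor 2.
Qed.

Definition Sc N : {set 'M['I_(2 * N + 1)]_2} :=
  [set A | [&& toZ A i0 i1 == 0, toZ A i1 i0 == 0 & toZ A i0 i0 == toZ A i1 i1]].
Definition SA N := setX (Sc N) [set: 'M['I_(2 * N + 1)]_2].
Definition SB N := setX [set: 'M['I_(2 * N + 1)]_2] (Sc N).
Definition Eij N (i j : 'I_2) : {set 'M['I_(2 * N + 1)]_2 * 'M['I_(2 * N + 1)]_2} :=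
  [set p | [&& toZ p.1 i j == 0, toZ p.2 i j == 0 &
     toZ p.1 j i * (toZ p.2 i0 i0 - toZ p.2 i1 i1) == toZ p.2 j i * (toZ p.1 i0 i0 - toZ p.1 i1 i1)]].

Lemma upper_sub N : GammaMinusGammaP N \subset (SA N :|: SB N) :|: (Eij N i0 i1 :|: Eij N i1 i0).
Proof.
apply/subsetP => -[A B]; rewrite inE /= commE => /andP[H /eqP h4].
move/and3P: H => [/eqP h1 /eqP h2 /eqP h3].
rewrite in_setU in_setU in_setU.
case: (key h1 h2 h3 h4) => [[e1 e2 e3]|[e1 e2 e3]|[e1 e2]|[e1 e2]].
- apply/orP; left; apply/orP; left.
  rewrite in_setX in_setT andbT inE e1 e2 !eqxx /=; apply/eqP; lia.
- apply/orP; left; apply/orP; right.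
  rewrite in_setX in_setT /= inE e1 e2 !eqxx /=; apply/eqP; lia.
- apply/orP; right; apply/orP; left.
  by rewrite inE /= e1 e2 h3 !eqxx.
- apply/orP; right; apply/orP; right.
  by rewrite inE /= e1 e2 h2 !eqxx.
Qed.

Lemma lower_sub N : SA N :|: SB N \subset GammaMinusGammaP N.
Proof.
apply/subsetP => -[A B]; rewrite in_setU !in_setX !in_setT andbT /=.
case/orP => hS; rewrite inE /= commE; move: hS; rewrite inE /=;
  move/and3P => [/eqP e1 /eqP e2 /eqP e3];
  by rewrite e1 e2 e3 subrr !mulr0 !mul0r !eqxx.
Qed.

Lemma mx2_eq (T : Type) (A A' : 'M[T]_2) (i j : 'I_2) : i != j ->
  A i j = A' i j -> A j i = A' j i -> A i0 i0 = A' i0 i0 -> A i1 i1 = A' i1 i1 -> A = A'.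
Proof.
move=> ij h1 h2 h3 h4; apply/matrixP => r c.
case: (ord2P r) => ->; case: (ord2P c) => -> //;
case: (ord2P i) ij h1 h2 => ->; case: (ord2P j) => -> //.
Qed.

Lemma Sc_card_le N : (#|Sc N| <= 2 * N + 1)%N.
Proof.
have inj : {in Sc N &, injective (fun A : 'M['I_(2 * N + 1)]_2 => A i0 i0)}.
  move=> A A'; rewrite !inE => /and3P[/eqP a1 /eqP a2 /eqP a3] /and3P[/eqP b1 /eqP b2 /eqP b3] h.
  apply: (@mx2_eq _ _ _ i0 i1) => //; apply: ent_inj; rewrite -!toZE.
  - by rewrite a1 b1.
  - by rewrite a2 b2.
  - by rewrite -a3 -b3 !toZE h.
rewrite -(card_in_imset inj); apply: leq_trans (max_card _) _; by rewrite card_ord.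
Qed.

Definition scal N (c : 'I_(2 * N + 1)) : 'M['I_(2 * N + 1)]_2 :=
  \matrix_(i, j) if i == j then c else cN N.

Lemma Sc_card_ge N : (2 * N + 1 <= #|Sc N|)%N.
Proof.
have inj : injective (@scal N).
  by move=> c c' /(congr1 (fun M : 'M['I_(2 * N + 1)]_2 => M i0 i0)); rewrite !mxE eqxx.
rewrite -{1}(card_ord (2 * N + 1)) -cardsT -(card_imset _ inj); apply: subset_leq_card.
apply/subsetP => _ /imsetP[c _ ->]; rewrite inE !toZE !mxE.
have n01 : (i0 == i1) = false by [].
have n10 : (i1 == i0) = false by [].
by rewrite n01 n10 !eqxx ent_cN !eqxx.
Qed.

Lemma SA_card N : #|SA N| = (#|Sc N| * (2 * N + 1) ^ 4)%N.
Proof. by rewrite /SA cardsX cardsT card_mx card_ord. Qed.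
Lemma SB_card N : #|SB N| = ((2 * N + 1) ^ 4 * #|Sc N|)%N.
Proof. by rewrite /SB cardsX cardsT card_mx card_ord. Qed.
Lemma SAB_card N : (#|SA N :&: SB N| <= #|Sc N| * #|Sc N|)%N.
Proof.
rewrite -cardsX; apply: subset_leq_card; apply/subsetP => -[A B].
by rewrite in_setI !in_setX !in_setT andbT /= => /andP[-> ->].
Qed.

Lemma absb N (c : 'I_(2 * N + 1)) : (absz (ent c) < (2 * N).+1)%N.
Proof. have := ent_bound c; lia. Qed.
Lemma absdb N (c c' : 'I_(2 * N + 1)) : (absz (ent c - ent c') < (2 * N).+1)%N.
Proof. have := ent_bound c; have := ent_bound c'; lia. Qed.

Lemma abs_sign_inj (x y : int) : absz x = absz y -> (x < 0) = (y < 0) -> x = y.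
Proof. by move=> h s; rewrite (intEsign x) (intEsign y) h s. Qed.

Definition gE N (i j : 'I_2) (p : 'M['I_(2 * N + 1)]_2 * 'M['I_(2 * N + 1)]_2) :
  Q (2 * N) * ((bool * bool * bool * bool) * ('I_(2 * N + 1) * 'I_(2 * N + 1))) :=
  let a3 := toZ p.1 j i in let b3 := toZ p.2 j i in
  let d := toZ p.1 i0 i0 - toZ p.1 i1 i1 in let e := toZ p.2 i0 i0 - toZ p.2 i1 i1 in
  ((inord (absz a3), inord (absz b3), inord (absz d), inord (absz e)),
   ((a3 < 0, b3 < 0, d < 0, e < 0), (p.1 i1 i1, p.2 i1 i1))).

Lemma E_card N i j : i != j ->
  (#|Eij N i j| <= #|Tn (2 * N)| * (16 * (2 * N + 1) ^ 2))%N.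
Proof.
move=> ij.
have inj : {in Eij N i j &, injective (@gE N i j)}.
  move=> [A B] [A' B']; rewrite !inE /= => /and3P[/eqP a1 /eqP b1 /eqP h] /and3P[/eqP a1' /eqP b1' /eqP h'].
  rewrite /gE /= => -[= ha hb hd he sa sb sd se e11 f11].
  have ua := congr1 val ha; have ub := congr1 val hb.
  have ud := congr1 val hd; have ue := congr1 val he.
  rewrite /= !toZE !inordK ?absb ?absdb // in ua ub ud ue.
  rewrite !toZE in sa sb sd se.
  have eA := abs_sign_inj ua sa; have eB := abs_sign_inj ub sb.
  have eD := abs_sign_inj ud sd; have eE := abs_sign_inj ue se.
  congr (_, _); apply: (@mx2_eq _ _ _ i j) => //; apply: ent_inj; rewrite -!toZE.
  - by rewrite a1 a1'.
  - by rewrite !toZE eA.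
  - move: eD; rewrite !toZE e11; lia.
  - by rewrite b1 b1'.
  - by rewrite !toZE eB.
  - move: eE; rewrite !toZE f11; lia.
rewrite -(card_in_imset inj).
have sub : @gE N i j @: Eij N i j \subset
   setX (Tn (2 * N)) [set: ((bool * bool * bool * bool) * ('I_(2 * N + 1) * 'I_(2 * N + 1)))%type].
  apply/subsetP => _ /imsetP[[A B] hp ->]; rewrite in_setX in_setT andbT inE /=.
  move: hp; rewrite inE /= => /and3P[_ _ /eqP h].
  rewrite /gE /= !toZE !inordK ?absb ?absdb //; apply/eqP.
  have := congr1 absz h; rewrite !abszM !toZE; by [].
apply: leq_trans (subset_leq_card sub) _.
rewrite cardsX cardsT !card_prod card_bool card_ord.
by rewrite leq_eqVlt; apply/orP; left; apply/eqP; congr (_ * _); rewrite expnS expn1; ring.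
Qed.

Definition Ssum (M : nat) : nat :=
  \sum_(m < M.+1) (2 * m + 1) * ((0 < m) * (M %/ m).+1 ^ 2).

Lemma upper_nat N : (card_GammaMinusGammaP N <=
  2 * (2 * N + 1) ^ 5 + 2 * (((2 * N).+1 * (2 * N).+1 + Ssum (2 * N)) * (16 * (2 * N + 1) ^ 2)))%N.
Proof.
rewrite /card_GammaMinusGammaP.
apply: leq_trans (subset_leq_card (upper_sub N)) _.
apply: leq_trans (leq_card_setU _ _) _.
have h1 : (#|SA N :|: SB N| <= 2 * (2 * N + 1) ^ 5)%N.
  apply: leq_trans (leq_card_setU _ _) _.
  rewrite SA_card SB_card.
  have := Sc_card_le N; set K := (2 * N + 1)%N; set s := #|Sc N| => hs.
  have : (s * K ^ 4 <= K * K ^ 4)%N by rewrite leq_mul2r hs orbT.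
  have : (K ^ 4 * s <= K ^ 4 * K)%N by rewrite leq_mul2l hs orbT.
  rewrite !expnS expn0; lia.
have h2 : (#|Eij N i0 i1 :|: Eij N i1 i0| <=
     2 * (((2 * N).+1 * (2 * N).+1 + Ssum (2 * N)) * (16 * (2 * N + 1) ^ 2)))%N.
  apply: leq_trans (leq_card_setU _ _) _.
  have t := card_Tn (2 * N); rewrite -/(Ssum (2 * N)) in t.
  have e1 := E_card N (i:=i0) (j:=i1) isT.
  have e2 := E_card N (i:=i1) (j:=i0) isT.
  set X := (16 * (2 * N + 1) ^ 2)%N in e1 e2 *.
  have : (#|Tn (2 * N)| * X <= ((2 * N).+1 * (2 * N).+1 + Ssum (2 * N)) * X)%N by rewrite leq_mul2r t orbT.
  lia.
exact: leq_add h1 h2.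
Qed.

Lemma lower_nat N : (2 * (2 * N + 1) ^ 5 <= card_GammaMinusGammaP N + (2 * N + 1) ^ 2)%N.
Proof.
rewrite /card_GammaMinusGammaP.
have h := cardsUI (SA N) (SB N).
have l := subset_leq_card (lower_sub N).
have i := SAB_card N.
have := Sc_card_ge N; have := Sc_card_le N.
rewrite SA_card SB_card in h.
set K := (2 * N + 1)%N in h i l *; set s := #|Sc N| in h i *.
move=> a b; have es : s = K by apply/eqP; rewrite eqn_leq a b.
rewrite es in h i.
have q1 : (K * K ^ 4 = K ^ 5)%N by rewrite [in RHS]expnS.
have q2 : (K ^ 4 * K = K ^ 5)%N by rewrite mulnC [in RHS]expnS.
have q3 : (K * K = K ^ 2)%N by rewrite expnS expn1.
rewrite q1 q2 in h; rewrite q3 in i.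
move: h i l; set u := #|SA N :|: SB N|; set v := #|SA N :&: SB N|.
set w := #|GammaMinusGammaP N|; set P := (K ^ 5)%N; set R := (K ^ 2)%N; lia.
Qed.

Definition tt M m := ((2 * m + 1) * ((0 < m) * (M %/ m).+1 ^ 2))%N.

Lemma tt_nat M m : (1 <= m)%N -> (m <= M)%N -> (m * tt M m <= 12 * (M * M))%N.
Proof.
move=> h1 h2; rewrite /tt h1 mul1n.
have hq := leq_divM M m; set q := (M %/ m)%N in hq *.
have a1 : (m * q + m <= 2 * M)%N by lia.
have a2 : ((m * q + m) * (m * q + m) <= (2 * M) * (2 * M))%N by apply: leq_mul.
have a3 : (2 * m + 1 <= 3 * m)%N by lia.
have a4 : (m * ((2 * m + 1) * q.+1 ^ 2) <= 3 * ((m * q + m) * (m * q + m)))%N.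
  have -> : (3 * ((m * q + m) * (m * q + m)) = m * (3 * m * q.+1 ^ 2))%N by rewrite expnS expn1; ring.
  by rewrite leq_mul2l leq_mul2r a3 !orbT.
lia.
Qed.


Lemma tt0 M : tt M 0 = 0%N.
Proof. by rewrite /tt ltnn mul0n muln0. Qed.
Lemma sum_recr (F : nat -> nat) n : (\sum_(m < n.+1) F m = \sum_(m < n) F m + F n)%N.
Proof. by rewrite big_ord_recr. Qed.
Lemma sum_one (F : nat -> nat) : (\sum_(m < 1) F m = F 0%N)%N.
Proof. by rewrite big_ord1. Qed.

Lemma upper_nat' N : (card_GammaMinusGammaP N <= 2 * (2 * N + 1) ^ 5 +
   32 * ((2 * N + 1) * (2 * N + 1)) * ((2 * N + 1) * (2 * N + 1) + Ssum (2 * N)))%N.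
Proof.
have u := upper_nat N.
have e : (2 * N).+1 = (2 * N + 1)%N by rewrite addn1.
rewrite e in u.
set K := (2 * N + 1)%N in u *; set S := Ssum (2 * N) in u *.
have -> : (32 * (K * K) * (K * K + S) = 2 * ((K * K + S) * (16 * K ^ 2)))%N.
  rewrite expnS expn1; ring.
exact: u.
Qed.

End P2.
End A.

Module B.
Import all_boot.
Set Implicit Arguments. Unset Strict Implicit. Unset Printing Implicit Defensive.
Import A.
Local Open Scope R_scope.

Lemma INR_add a b : INR (a + b)%nat = INR a + INR b.
Proof. exact: plus_INR. Qed.
Lemma INR_mul a b : INR (a * b)%nat = INR a * INR b.
Proof. exact: mult_INR. Qed.
Lemma INR_leq a b : (a <= b)%nat -> INR a <= INR b.
Proof. by move/leP; apply: le_INR. Qed.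

Lemma ln_le' x y : 0 < x -> x <= y -> ln x <= ln y.
Proof.
move=> x0 [h|->]; last exact: Rle_refl.
by left; apply: ln_increasing.
Qed.

Lemma ln_step (y : R) : 0 < y -> ln y + / (y + 1) <= ln (y + 1).
Proof.
move=> y0.
set u := / (y + 1).
have u0 : 0 < u by rewrite /u; apply: Rinv_0_lt_compat; lra.
have e1 : 1 + - u <= exp (- u) by apply: exp_ineq1_le.
have yu : 1 - u = y * u by rewrite /u; field; lra.
have h : exp u * exp (- u) = 1 by rewrite -exp_plus Rplus_opp_r exp_0.
have eu : y * exp u <= y + 1.
  have : y * u * exp u <= exp (- u) * exp u.
    apply: Rmult_le_compat_r; [left; apply: exp_pos | lra].
  rewrite Rmult_comm in h; rewrite h => hh.
  have : y * exp u * u <= 1 by lra.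
  move=> hh'.
  have uy : u * (y + 1) = 1 by rewrite /u; field; lra.
  have : y * exp u * u * (y + 1) <= 1 * (y + 1).
    apply: Rmult_le_compat_r; lra.
  rewrite Rmult_assoc uy; lra.
rewrite -(ln_exp (ln y + u)) exp_plus exp_ln //.
apply: ln_le' => //; apply: Rmult_lt_0_compat => //; apply: exp_pos.
Qed.

Lemma tt_R M m : (1 <= m)%nat -> (m <= M)%nat -> INR (tt M m) <= 12 * INR M ^ 2 / INR m.
Proof.
move=> h1 h2; have := INR_leq (tt_nat h1 h2); rewrite !INR_mul => h.
have m0 : 0 < INR m by apply: lt_0_INR; apply/ltP.
apply: (Rmult_le_reg_l (INR m)) => //.
have -> : INR m * (12 * INR M ^ 2 / INR m) = INR 12 * (INR M * INR M).
  rewrite (_ : INR 12 = 12); last by rewrite /=; lra.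
  field; lra.
exact: h.
Qed.

Lemma harm M n : (1 <= n)%nat -> (n <= M)%nat ->
  INR (\sum_(m < n.+1) tt M m) <= 12 * INR M ^ 2 * (1 + ln (INR n)).
Proof.
elim: n => [//|n IH] h1 h2.
rewrite sum_recr INR_add.
have t1 := tt_R (ltn0Sn n) h2.
case: (posnP n) => [n0|npos].
  move: t1; rewrite n0 sum_one tt0; change (INR 0) with 0; change (INR 1) with 1; rewrite ln_1; lra.
have := IH npos (ltnW h2) => ih.
have st := ln_step (lt_0_INR _ (ltP npos)).
rewrite S_INR in t1 *.
have c0 : 0 <= 12 * INR M ^ 2 by apply: Rmult_le_pos; [lra| apply: pow2_ge_0].
have := Rmult_le_compat_l _ _ _ c0 st.
rewrite /Rdiv in t1; lra.
Qed.

Lemma INR_exp a k : INR (a ^ k)%nat = INR a ^ k.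
Proof. elim: k => [|k IH]; first by rewrite expn0. by rewrite expnS INR_mul IH. Qed.

Lemma Ssum_R M : (1 <= M)%nat -> INR (Ssum M) <= 12 * INR M ^ 2 * (1 + ln (INR M)).
Proof. move=> h; exact: (harm h (leqnn M)). Qed.

Lemma ln_ge1 x : 3 <= x -> 1 <= ln x.
Proof.
move=> h; rewrite -(ln_exp 1); apply: ln_le'; first exact: exp_pos.
have := exp_le_3; lra.
Qed.

Lemma INR_lit (k : nat) : INR k = IZR (Z.of_nat k).
Proof. exact: INR_IZR_INZ. Qed.

Lemma upper_R N : (3 <= N)%nat ->
  INR (card_GammaMinusGammaP N) - 2 * (2 * INR N) ^ 5 <= 50000 * INR N ^ 4 * ln (INR N).
Proof.
move=> h3.
have two : INR 2 = 2 by rewrite INR_lit.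
have eK : INR (2 * N + 1) = 2 * INR N + 1 by rewrite plus_INR mult_INR two.
have e2N : INR (2 * N) = 2 * INR N by rewrite mult_INR two.
have hS := Ssum_R (M := (2 * N)%nat) ltac:(by rewrite muln_gt0 (leq_trans _ h3)).
rewrite e2N in hS.
have u := INR_leq (upper_nat' N).
move: u eK hS; generalize (2 * N + 1)%nat (Ssum (2 * N)) (card_GammaMinusGammaP N) => K S c u eK hS.
rewrite (plus_INR (2 * K ^ 5)) (mult_INR 2 (K ^ 5)) INR_exp (mult_INR (32 * (K * K)))
  (mult_INR 32) (mult_INR K K) (plus_INR (K * K) S) (mult_INR K K) two eK in u.
have t32 : INR 32 = 32 by rewrite INR_lit.
rewrite t32 in u.
have n3 : 3 <= INR N by have := INR_leq h3; rewrite INR_lit.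
have s0 := pos_INR S.
move: u hS n3 s0; generalize (INR N) (INR S) (INR c) => n s r u hS n3 s0.
set L := ln n.
have L1 : 1 <= L by apply: ln_ge1.
have L2 : ln 2 <= L by apply: ln_le'; lra.
have e2 : ln (2 * n) = ln 2 + L by rewrite ln_mult; [reflexivity|lra|lra].
rewrite e2 in hS.
have n2 : 0 <= n ^ 2 by apply: pow2_ge_0.
have hS' : s <= 144 * n ^ 2 * L by nra.
have hK2 : (2 * n + 1) * (2 * n + 1) <= 9 * n ^ 2 * L by nra.
have hA : (2 * n + 1) * (2 * n + 1) + s <= 153 * n ^ 2 * L by lra.
have hB : 32 * ((2 * n + 1) * (2 * n + 1)) * ((2 * n + 1) * (2 * n + 1) + s) <=
          32 * (9 * n ^ 2) * (153 * n ^ 2 * L).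
  apply: Rmult_le_compat.
  - nra.
  - nra.
  - nra.
  - exact: hA.
have n4 : 0 <= n ^ 4 by rewrite (_ : 4%nat = (2 * 2)%nat) // pow_mult; apply: pow2_ge_0.
have hC : 2 * ((2 * n + 1) * ((2 * n + 1) * ((2 * n + 1) * ((2 * n + 1) * ((2 * n + 1) * 1))))) -
   2 * (2 * n) ^ 5 <= 422 * n ^ 4 * L.
  have : 0 <= n ^ 3 by apply: pow_le; lra.
  nra.
have : 32 * (9 * n ^ 2) * (153 * n ^ 2 * L) = 44064 * n ^ 4 * L by ring.
have : 0 <= n ^ 4 * L by nra.
lra.
Qed.

Lemma lower_R N : 0 <= INR (card_GammaMinusGammaP N) - 2 * (2 * INR N) ^ 5.
Proof.
have two : INR 2 = 2 by rewrite INR_lit.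
have eK : INR (2 * N + 1) = 2 * INR N + 1 by rewrite plus_INR mult_INR two.
have u := INR_leq (lower_nat N).
move: u eK; generalize (2 * N + 1)%nat (card_GammaMinusGammaP N) => K c u eK.
rewrite (mult_INR 2) (plus_INR c) !INR_exp two eK in u.
have n0 := pos_INR N.
move: u n0; generalize (INR N) (INR c) => n r u n0.
have : 0 <= n ^ 2 by apply: pow2_ge_0.
have : 0 <= n ^ 3 by apply: pow_le.
have : 0 <= n ^ 4 by apply: pow_le.
nra.
Qed.

Lemma final :
  exists (C : R) (N0 : nat), (1 <= N0)%coq_nat /\
    forall N : nat, (N0 <= N)%coq_nat ->
      Rabs (INR (card_GammaMinusGammaP N) - 2 * (2 * INR N) ^ 5)
        <= C * INR N ^ 4 * ln (INR N).
Proof.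
exists 50000, 3%nat; split; first by apply/leP.
move=> N /leP h3.
apply: Rabs_le; split; last exact: upper_R.
have := lower_R N.
have L1 : 1 <= ln (INR N) by apply: ln_ge1; have := INR_leq h3; rewrite INR_lit.
have : 0 <= INR N ^ 4 by apply: pow_le; apply: pos_INR.
nra.
Qed.

End B.

Local Open Scope R_scope.

Theorem proposition2p3 :
  exists (C : R) (N0 : nat), (1 <= N0)%nat /\
    forall N : nat, (N0 <= N)%nat ->
      Rabs (INR (card_GammaMinusGammaP N) - 2 * (2 * INR N) ^ 5)
        <= C * INR N ^ 4 * ln (INR N).
Proof. exact B.final. Qed.
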